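(* Let $\Lambda_{TU}=\{(F(x),\Lambda_x,v(x))\}_{x\in X}$ be a continuous $(T,U)$-controlled $g$-fusion frame for $H$ with frame operator $S_C$, and assume $S_C^{-1}$ commutes with $T$ and with $U$. Then $\Gamma_{TU}=\{(S_C^{-1}F(x),\;\Lambda_xP_{F(x)}S_C^{-1},\;v(x))\}_{x\in X}$ is a continuous $(T,U)$-controlled $g$-fusion frame for $H$ whose frame operator is $S_C^{-1}$.
   Context: $H$ is a separable complex Hilbert space, $\mathcal{B}(H)$ the bounded operators on $H$, $\mathcal{GB}^+(H)$ the positive bounded operators on $H$ with bounded inverse, $P_M$ the orthogonal projection onto a closed subspace $M$. Let $(X,\mu)$ be a measure space, $\{K_x\}_{x\in X}$ Hilbert spaces, $v:X\to\mathbb{R}^+$ measurable, $F$ a map from $X$ to closed subspaces of $H$ with $x\mapsto P_{F(x)}f$ weakly measurable for all $f$, $\Lambda_x\in\mathcal{B}(F(x),K_x)$, and $T,U\in\mathcal{GB}^+(H)$. The family is a continuous $(T,U)$-controlled $g$-fusion frame for $H$ if there are $0<A\le B<\infty$ with $A\|f\|^2\le\int_X v(x)^2\langle\Lambda_xP_{F(x)}Uf,\Lambda_xP_{F(x)}Tf\rangle d\mu(x)\le B\|f\|^2$ for all $f\in H$. Its frame operator $S_C\in\mathcal{B}(H)$ is given by $\langle S_Cf,g\rangle=\int_X v(x)^2\langle T^*P_{F(x)}\Lambda_x^*\Lambda_xP_{F(x)}Uf,g\rangle d\mu(x)$; it satisfies $AI_H\le S_C\le BI_H$ and is invertible. In $\Gamma_{TU}$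 the subspace attached to $x$ is $S_C^{-1}F(x)$ and the operator is $\Lambda_xP_{F(x)}S_C^{-1}$ restricted to it, so its frame operator $S'$ satisfies $\langle S'f,f\rangle=\int_X v(x)^2\langle\Lambda_xP_{F(x)}S_C^{-1}P_{S_C^{-1}F(x)}Uf,\Lambda_xP_{F(x)}S_C^{-1}P_{S_C^{-1}F(x)}Tf\rangle d\mu(x)$. *)

(* Defs.v *)
(* Complex scalars are R[i] (mathcomp real_closed `complex`) for R : realType;
   the order on R[i] is the numClosedField order: z <= w iff w - z is a
   nonnegative real. *)
From mathcomp Require Import all_boot all_algebra.
From mathcomp Require Import all_classical all_reals all_analysis.
From mathcomp Require Import complex.
Set Implicit Arguments. Unset Strict Implicit. Unset Printing Implicit Defensive.
Import GRing.Theory Num.Theory.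
Local Open Scope ring_scope.
Local Open Scope classical_set_scope.

Definition ipnorm (R : realType) (V : lmodType R[i]) (ip : V -> V -> R[i])
  (x : V) : R := Num.sqrt (complex.Re (ip x x)).

Definition ip_cvg (R : realType) (V : lmodType R[i]) (ip : V -> V -> R[i])
  (u : nat -> V) (f : V) : Prop :=
  forall e : R, 0 < e -> exists N : nat, forall n, (N <= n)%N ->
    ipnorm ip (u n - f) < e.

Definition ip_cauchy (R : realType) (V : lmodType R[i]) (ip : V -> V -> R[i])
  (u : nat -> V) : Prop :=
  forall e : R, 0 < e -> exists N : nat, forall m n, (N <= m)%N -> (N <= n)%N ->
    ipnorm ip (u m - u n) < e.

Record hilbert (R : realType) := Hilbert {
  hsort :> lmodType R[i];
  hip : hsort -> hsort -> R[i];
  hip_linear : forall (a : R[i]) (x y z : hsort),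
      hip (a *: x + y) z = a * hip x z + hip y z;
  hip_conj : forall x y : hsort, hip x y = Num.conj (hip y x);
  hip_ge0 : forall x : hsort, 0 <= hip x x;
  hip_eq0 : forall x : hsort, hip x x = 0 -> x = 0;
  hcomplete : forall u : nat -> hsort, ip_cauchy hip u ->
      exists f, ip_cvg hip u f }.

Arguments hip {R} h _ _.

Definition hnorm (R : realType) (H : hilbert R) (x : H) : R := ipnorm (hip H) x.
Definition hcvg (R : realType) (H : hilbert R) (u : nat -> H) (f : H) : Prop :=
  ip_cvg (hip H) u f.

Definition separable (R : realType) (H : hilbert R) : Prop :=
  exists D : nat -> H, forall (f : H) (e : R), 0 < e ->
    exists n, hnorm (f - D n) < e.

Definition bounded_op (R : realType) (H1 H2 : hilbert R) (A : H1 -> H2) : Prop :=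
  (forall (a : R[i]) (x y : H1), A (a *: x + y) = a *: A x + A y) /\
  exists M : R, forall x, hnorm (A x) <= M * hnorm x.

Definition GBpos (R : realType) (H : hilbert R) (A : H -> H) : Prop :=
  bounded_op A /\ (forall f : H, 0 <= hip H (A f) f) /\
  exists B : H -> H, bounded_op B /\ (forall f, A (B f) = f) /\
                     (forall f, B (A f) = f).

Definition closed_subspace (R : realType) (H : hilbert R) (M : set H) : Prop :=
  M 0 /\ (forall (a : R[i]) (x y : H), M x -> M y -> M (a *: x + y)) /\
  (forall (u : nat -> H) (f : H), (forall n, M (u n)) -> hcvg u f -> M f).

Definition orth_proj (R : realType) (H : hilbert R) (M : set H) (P : H -> H)
  : Prop :=
  forall f : H, M (P f) /\ (forall g : H, M g -> hip H (f - P f) g = 0).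

Definition cintegrable (R : realType) (d : measure_display) (X : measurableType d)
  (mu : {measure set X -> \bar R}) (h : X -> R[i]) : Prop :=
  mu.-integrable setT (fun x => (complex.Re (h x))%:E) /\
  mu.-integrable setT (fun x => (complex.Im (h x))%:E).

Definition cintegral (R : realType) (d : measure_display) (X : measurableType d)
  (mu : {measure set X -> \bar R}) (h : X -> R[i]) : R[i] :=
  Complex (Rintegral mu setT (fun x => complex.Re (h x)))
          (Rintegral mu setT (fun x => complex.Im (h x))).

Definition weakly_measurable (R : realType) (d : measure_display)
  (X : measurableType d) (H : hilbert R) (P : X -> H -> H) : Prop :=
  forall f g : H,
    measurable_fun setT (fun x => complex.Re (hip H (P x f) g)) /\
    measurable_fun setT (fun x => complex.Im (hip H (P x f) g)).

Definition frame_int (R : realType) (d : measure_display) (X : measurableType d)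
  (H : hilbert R) (K : X -> hilbert R) (v : X -> R) (P : X -> H -> H)
  (Lam : forall x, H -> K x) (T U : H -> H) (f g : H) (x : X) : R[i] :=
  Complex (v x ^+ 2) 0 * hip (K x) (Lam x (P x (U f))) (Lam x (P x (T g))).

(* {(F(x), Lam_x, v(x))} is a continuous (T,U)-controlled g-fusion frame;
   P x is the orthogonal projection onto F x; Lam x is a bounded operator
   on H (only its restriction to F x matters, it is always applied after P x). *)
Definition cgf_frame (R : realType) (d : measure_display) (X : measurableType d)
  (mu : {measure set X -> \bar R}) (H : hilbert R) (K : X -> hilbert R)
  (v : X -> R) (F : X -> set H) (P : X -> H -> H) (Lam : forall x, H -> K x)
  (T U : H -> H) : Prop :=
  (forall x, closed_subspace (F x) /\ orth_proj (F x) (P x)) /\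
  weakly_measurable P /\
  (forall x, bounded_op (Lam x)) /\
  measurable_fun setT v /\ (forall x, 0 < v x) /\
  GBpos T /\ GBpos U /\
  (forall f : H, cintegrable mu (frame_int v P Lam T U f f)) /\
  exists A B : R, 0 < A /\ A <= B /\
    forall f : H,
      Complex (A * hnorm f ^+ 2) 0 <= cintegral mu (frame_int v P Lam T U f f)
      /\ cintegral mu (frame_int v P Lam T U f f) <= Complex (B * hnorm f ^+ 2) 0.

(* S is the frame operator:
   <S f, g> = \int v(x)^2 <T^* P Lam^* Lam P U f, g> dmu
            = \int v(x)^2 <Lam P U f, Lam P T g> dmu   (T = T^* as T >= 0) *)
Definition is_frame_op (R : realType) (d : measure_display) (X : measurableType d)
  (mu : {measure set X -> \bar R}) (H : hilbert R) (K : X -> hilbert R)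
  (v : X -> R) (P : X -> H -> H) (Lam : forall x, H -> K x)
  (T U : H -> H) (S : H -> H) : Prop :=
  bounded_op S /\
  forall f g : H, cintegrable mu (frame_int v P Lam T U f g) /\
    hip H (S f) g = cintegral mu (frame_int v P Lam T U f g).

(* Main.v *)
Require Import Defs.
From mathcomp Require Import all_boot all_order all_algebra.
From mathcomp Require Import all_classical all_reals all_analysis.
From mathcomp Require Import complex.
From mathcomp Require Import ring lra.
Import Order.TTheory GRing.Theory Num.Theory.
Set Implicit Arguments. Unset Strict Implicit.
Import numFieldNormedType.Exports.
Local Open Scope ring_scope.
Local Open Scope classical_set_scope.

Lemma sq_lt_norm (R : realType) (x e : R) : 0 < e -> x ^+ 2 < e ^+ 2 -> `|x| < e.
Proof.
move=> e0 h; rewrite -(real_normK (num_real x)) in h.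
have := normr_ge0 x; nra.
Qed.

Lemma cvg_geom_sq (R : realType) (a : nat -> R) (l C q : R) : 0 <= q -> q < 1 ->
  (forall k, (a k - l) ^+ 2 <= C * q ^+ k) -> (a : R^nat) @ \oo --> l.
Proof.
move=> q0 q1 h; apply/cvgrPdist_lt => e e0.
have qc : (GRing.exp q : R ^nat) @ \oo --> 0 by apply: cvg_expr; rewrite ger0_norm.
have ep : 0 < e ^+ 2 / (`|C| + 1) by rewrite divr_gt0 ?exprn_gt0 // ltr_wpDl.
move/cvgrPdist_lt : qc => /(_ _ ep); apply: filterS => k.
rewrite sub0r normrN ger0_norm ?exprn_ge0 // => hk.
apply: sq_lt_norm => //; rewrite -sqrrN opprB.
apply: (le_lt_trans (h k)); apply: (le_lt_trans (y := `|C| * q ^+ k)).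
  by apply: ler_wpM2r; [exact: exprn_ge0 | exact: ler_norm].
have qk0 : 0 <= q ^+ k by rewrite exprn_ge0.
rewrite ltr_pdivlMr ?ltr_wpDl // in hk.
have := normr_ge0 C; nra.
Qed.

Fixpoint runmax (R : realType) (phi : nat -> R) (k : nat) : R :=
  match k with 0%N => phi 0%N | k'.+1 => Num.max (runmax phi k') (phi k'.+1) end.

Lemma runmax_ge (R : realType) (phi : nat -> R) n k : (n <= k)%N -> phi n <= runmax phi k.
Proof.
elim: k => [|k IH]; first by rewrite leqn0 => /eqP ->.
rewrite leq_eqVlt => /orP[/eqP -> /=|]; first by rewrite le_max lexx orbT.
by rewrite ltnS => /IH /= h; rewrite le_max h.
Qed.

Lemma runmax_le (R : realType) (phi : nat -> R) L k : (forall n, phi n <= L) -> runmax phi k <= L.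
Proof. by move=> h; elim: k => [|k IH] //=; rewrite ge_max IH h. Qed.

Lemma runmax_cvg (R : realType) (phi : nat -> R) L : (forall n, phi n <= L) ->
  (forall e, 0 < e -> exists n, L - e < phi n) -> (runmax phi : R^nat) @ \oo --> L.
Proof.
move=> hle hsup; apply/cvgrPdist_lt => e e0.
have [n hn] := hsup e e0.
apply: filterS (nbhs_infty_ge n) => k nk.
have h1 := runmax_ge phi nk; have h2 := runmax_le k hle.
rewrite ger0_norm ?subr_ge0 //; lra.
Qed.

Section HB.
Variables (R : realType) (H : hilbert R).
Local Notation ip := (hip H).
Local Notation N2 x := (complex.Re (hip H x x)).

Lemma ip0l z : ip 0 z = 0.
Proof.
have := hip_linear 1 (0 : H) 0 z; rewrite scale1r addr0 mul1r => h.
by apply: (addrI (ip 0 z)); rewrite addr0 -h.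
Qed.

Lemma ipDl x y z : ip (x + y) z = ip x z + ip y z.
Proof. by have := hip_linear 1 x y z; rewrite scale1r mul1r. Qed.

Lemma ipZl a x z : ip (a *: x) z = a * ip x z.
Proof. by have := hip_linear a x 0 z; rewrite addr0 ip0l addr0. Qed.

Lemma ipNl x z : ip (- x) z = - ip x z.
Proof. by rewrite -scaleN1r ipZl mulN1r. Qed.

Lemma ipBl x y z : ip (x - y) z = ip x z - ip y z.
Proof. by rewrite ipDl ipNl. Qed.

Lemma ipDr x y z : ip z (x + y) = ip z x + ip z y.
Proof. by rewrite (hip_conj z x) (hip_conj z y) hip_conj ipDl rmorphD. Qed.

Lemma ipZr a x z : ip z (a *: x) = Num.conj a * ip z x.
Proof. by rewrite (hip_conj z x) hip_conj ipZl rmorphM. Qed.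

Lemma ip0r z : ip z 0 = 0.
Proof. by rewrite hip_conj ip0l rmorph0. Qed.

Lemma ipNr x z : ip z (- x) = - ip z x.
Proof. by rewrite -scaleN1r ipZr rmorphN rmorph1 mulN1r. Qed.

Lemma ipBr x y z : ip z (x - y) = ip z x - ip z y.
Proof. by rewrite ipDr ipNr. Qed.

Lemma ReC (z : R[i]) : complex.Re (Num.conj z) = complex.Re z.
Proof. by case: z. Qed.
Lemma ImC (z : R[i]) : complex.Im (Num.conj z) = - complex.Im z.
Proof. by case: z. Qed.

Lemma Re_ipC x y : complex.Re (ip y x) = complex.Re (ip x y).
Proof. by rewrite hip_conj ReC. Qed.

Lemma Im_ipxx x : complex.Im (ip x x) = 0.
Proof. by have := hip_ge0 x; rewrite lecE /= => /andP[/eqP <- _]. Qed.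

Lemma N2_ge0 x : 0 <= N2 x.
Proof. by have := hip_ge0 x; rewrite lecE /= => /andP[_ ->]. Qed.

Lemma N2_eq0 x : N2 x = 0 -> x = 0.
Proof.
move=> h; apply: hip_eq0; move: h (Im_ipxx x); case: (ip x x) => a b /= -> ->.
by [].
Qed.

Lemma ipxx_real x : ip x x = Complex (N2 x) 0.
Proof. by move: (Im_ipxx x); case: (ip x x) => a b /= ->. Qed.

Lemma Re_ipDD x y : N2 (x + y) = N2 x + N2 y + 2 * complex.Re (ip x y).
Proof.
rewrite ipDl !ipDr !raddfD /= [complex.Re (ip y x)]Re_ipC. 
lra.
Qed.

Lemma Re_ipBB x y : N2 (x - y) = N2 x + N2 y - 2 * complex.Re (ip x y).
Proof.
rewrite ipBl !ipBr !raddfB /= [complex.Re (ip y x)]Re_ipC.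
rewrite mulr2n mulrDl mul1r; lra.
Qed.

Lemma Re_ipZr (t : R) x y : complex.Re (ip x ((Complex t 0) *: y)) = t * complex.Re (ip x y).
Proof. by rewrite ipZr; case: (ip x y) => a b /=; rewrite oppr0 !mul0r subr0. Qed.

Lemma Re_ipZl (t : R) x y : complex.Re (ip ((Complex t 0) *: x) y) = t * complex.Re (ip x y).
Proof. by rewrite ipZl; case: (ip x y) => a b /=; rewrite !mul0r subr0. Qed.

Lemma N2Z (t : R) x : N2 ((Complex t 0) *: x) = t ^+ 2 * N2 x.
Proof. by rewrite Re_ipZl Re_ipZr mulrA expr2. Qed.

Lemma Im_as_Re x y : complex.Im (ip x y) = complex.Re (ip x ('i%C *: y)).
Proof. by rewrite ipZr; case: (ip x y) => a b /=; lra. Qed.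

Lemma N2i y : N2 ('i%C *: y) = N2 y.
Proof.
rewrite ipZl ipZr ipxx_real /=; lra.
Qed.

Lemma CS_Re x y : complex.Re (ip x y) ^+ 2 <= N2 x * N2 y.
Proof.
have [/N2_eq0 ->|] := eqVneq (N2 y) 0.
  by rewrite ip0r /= expr2 mul0r ip0l mulr0.
move=> ny; have py : 0 < N2 y by rewrite lt0r ny N2_ge0.
pose t := - complex.Re (ip x y) / N2 y.
have := N2_ge0 (x + (Complex t 0) *: y).
rewrite Re_ipDD N2Z Re_ipZr /t => h.
have e : N2 y * (N2 x + (- complex.Re (ip x y) / N2 y) ^+ 2 * N2 y +
   2 * (- complex.Re (ip x y) / N2 y * complex.Re (ip x y))) =
   N2 x * N2 y - complex.Re (ip x y) ^+ 2.
  by field; rewrite ny.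
have := mulr_ge0 (N2_ge0 y) h; rewrite e subr_ge0 //.
Qed.


Lemma sub_mem (M : set H) x y : closed_subspace M -> M x -> M y -> M (x - y).
Proof.
move=> [_ [cl _]] mx my; have := cl (-1) y x my mx.
by rewrite scaleN1r addrC.
Qed.

Lemma proj_uniq (M : set H) P f m : closed_subspace M -> orth_proj M P ->
  M m -> (forall g, M g -> ip (f - m) g = 0) -> P f = m.
Proof.
move=> cM oP Mm hm; have [MP hP] := oP f.
have Md : M (P f - m) by apply: sub_mem.
have e : P f - m = (f - m) - (f - P f).
  by rewrite opprB [RHS]addrC addrA subrK.
apply/eqP; rewrite -subr_eq0; apply/eqP/hip_eq0.
by rewrite {1}e ipBl hm // hP // subrr.
Qed.

Lemma proj_id (M : set H) P m : closed_subspace M -> orth_proj M P -> M m -> P m = m.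
Proof. by move=> cM oP Mm; apply: (proj_uniq cM oP Mm) => g _; rewrite subrr ip0l. Qed.

Lemma proj_lin (M : set H) P a f g : closed_subspace M -> orth_proj M P ->
  P (a *: f + g) = a *: P f + P g.
Proof.
move=> cM oP; apply: (proj_uniq cM oP).
  by case: cM => _ [cl _]; apply: cl; [case: (oP f)|case: (oP g)].
move=> h Mh.
have -> : a *: f + g - (a *: P f + P g) = a *: (f - P f) + (g - P g).
  by rewrite scalerBr opprD !addrA; congr (_ + _); rewrite addrAC.
by rewrite ipDl ipZl; case: (oP f) => _ -> //; case: (oP g) => _ -> //; rewrite mulr0 addr0.
Qed.

Lemma proj_perp (M : set H) P y : closed_subspace M -> orth_proj M P ->
  (forall m, M m -> ip y m = 0) -> P y = 0.
Proof.
move=> cM oP hy; apply: (proj_uniq cM oP); first by case: cM.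
by move=> g Mg; rewrite subr0 hy.
Qed.

Lemma proj_orth (M : set H) P f g : orth_proj M P -> ip (P f) (g - P g) = 0.
Proof.
move=> oP; rewrite hip_conj; case: (oP g) => _ -> //; first by rewrite rmorph0.
by case: (oP f).
Qed.

Lemma proj_self (M : set H) P f g : orth_proj M P -> ip (P f) g = ip f (P g).
Proof.
move=> oP.
have e1 : ip (P f) g = ip (P f) (P g) + ip (P f) (g - P g) by rewrite -ipDr addrC subrK.
have e2 : ip f (P g) = ip (P f) (P g) + ip (f - P f) (P g) by rewrite -ipDl addrC subrK.
rewrite e1 e2 (proj_orth _ _ oP); case: (oP f) => _ ->; last by case: (oP g).
by rewrite !addr0.
Qed.

Lemma proj_N2 (M : set H) P f : orth_proj M P -> N2 (P f) <= N2 f.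
Proof.
move=> oP; have -> : N2 f = N2 (P f + (f - P f)) by rewrite addrC subrK.
rewrite Re_ipDD (proj_orth _ _ oP) /= mulr0 addr0 lerDl; exact: N2_ge0.
Qed.

End HB.

Section WMs.
Variables (R : realType) (d : measure_display) (X : measurableType d) (H : hilbert R).
Local Notation ip := (hip H).
Local Notation N2 x := (complex.Re (hip H x x)).

Definition WM (y : X -> H) := forall g : H,
  measurable_fun setT (fun x => complex.Re (ip (y x) g)).

Lemma WM_cst c : WM (fun _ => c).
Proof. by move=> g; exact: measurable_cst. Qed.

Lemma WM_lin a (y z : X -> H) : WM y -> WM z -> WM (fun x => a *: y x + z x).
Proof.
move=> hy hz g.
have -> : (fun x => complex.Re (ip (a *: y x + z x) g)) =
  (fun x => complex.Re (ip (y x) (Num.conj a *: g)) + complex.Re (ip (z x) g)).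
  by apply: funext => x; rewrite ipDl ipZl ipZr conjCK raddfD.
exact: measurable_realfun.measurable_funD.
Qed.

Lemma WM_N2 (y : X -> H) : separable H -> WM y -> measurable_fun setT (fun x => N2 (y x)).
Proof.
move=> [D hD] hy.
pose phi (x : X) (n : nat) := 2 * complex.Re (ip (y x) (D n)) - N2 (D n).
apply: (measurable_realfun.measurable_fun_cvg (h := fun k x => runmax (phi x) k)).
  elim => [|k IH] /=; first by apply: measurable_realfun.measurable_funB; [apply: measurable_realfun.measurable_funM; [exact: measurable_cst|exact: hy]|exact: measurable_cst].
  apply: measurable_realfun.measurable_maxr => //.
  by apply: measurable_realfun.measurable_funB; [apply: measurable_realfun.measurable_funM; [exact: measurable_cst|exact: hy]|exact: measurable_cst].
move=> x _; apply: runmax_cvg.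
  move=> n; rewrite /phi; have := N2_ge0 (y x - D n); rewrite Re_ipBB; lra.
move=> e e0; have se : 0 < Num.sqrt e by rewrite sqrtr_gt0.
have [n hn] := hD (y x) (Num.sqrt e) se.
exists n; rewrite /phi.
have h2 : N2 (y x - D n) < e.
  by move: hn; rewrite /hnorm /ipnorm ltr_sqrt.
move: h2; rewrite Re_ipBB; lra.
Qed.

Lemma WM_ipRe (y z : X -> H) : separable H -> WM y -> WM z ->
  measurable_fun setT (fun x => complex.Re (ip (y x) (z x))).
Proof.
move=> sH hy hz.
have -> : (fun x => complex.Re (ip (y x) (z x))) =
  (fun x => 4^-1 * (N2 (1 *: y x + z x) - N2 ((-1) *: z x + y x))).
  apply: funext => x; rewrite scale1r scaleN1r (addrC (- z x)) Re_ipDD Re_ipBB; by field.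
apply: (measurable_realfun.measurable_funM (f := fun _ => 4^-1)); first exact: measurable_cst.
apply: (measurable_realfun.measurable_funB (f := fun x => N2 (1 *: y x + z x))
  (g := fun x => N2 ((-1) *: z x + y x))); apply: WM_N2 => //; exact: WM_lin.
Qed.

Lemma WM_proj (P : X -> H -> H) (F : X -> set H) (w : X -> H) : separable H ->
  (forall x, orth_proj (F x) (P x)) -> weakly_measurable P -> WM w ->
  WM (fun x => P x (w x)).
Proof.
move=> sH oP mP hw g.
have -> : (fun x => complex.Re (ip (P x (w x)) g)) =
   (fun x => complex.Re (ip (w x) (P x g))).
  by apply: funext => x; rewrite (proj_self _ _ (oP x)).
apply: WM_ipRe => // h; exact: (mP g h).1.
Qed.

End WMs.

Section Ops.
Variables (R : realType) (H : hilbert R).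
Local Notation ip := (hip H).
Local Notation N2 x := (complex.Re (hip H x x)).

Definition linop (S : H -> H) := forall a x y, S (a *: x + y) = a *: S x + S y.

Lemma lin0 S : linop S -> S 0 = 0.
Proof.
move=> hS; have := hS 1 0 0; rewrite !scale1r addr0 => h.
by apply: (addrI (S 0)); rewrite addr0 -h.
Qed.

Lemma linD S x y : linop S -> S (x + y) = S x + S y.
Proof. by move=> hS; have := hS 1 x y; rewrite !scale1r. Qed.

Lemma linZ S a x : linop S -> S (a *: x) = a *: S x.
Proof. by move=> hS; have := hS a x 0; rewrite !addr0 lin0 // addr0. Qed.

Lemma linB S x y : linop S -> S (x - y) = S x - S y.
Proof. by move=> hS; rewrite linD // -scaleN1r linZ // scaleN1r. Qed.

Lemma sa_of_real (S : H -> H) : linop S -> (forall f, complex.Im (ip (S f) f) = 0) ->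
  forall f g, ip (S f) g = ip f (S g).
Proof.
move=> hS hIm f g.
have e1 := hIm (f + g); have e2 := hIm (f + 'i%C *: g).
rewrite (linD _ _ hS) in e1. rewrite (linD _ _ hS) (linZ _ _ hS) in e2.
rewrite !ipDl !ipDr in e1. rewrite !ipDl !ipDr !ipZl !ipZr in e2.
rewrite (hip_conj f (S g)).
move: e1 e2 (hIm f) (hIm g).
case: (ip (S f) g) => a1 a2; case: (ip (S g) f) => b1 b2.
case: (ip (S f) f) => c1 c2; case: (ip (S g) g) => d1 d2 /= e1 e2 e3 e4.
apply/eqP; rewrite eq_complex /=; apply/andP; split; apply/eqP; lra.
Qed.

Lemma hnorm2 (x : H) : hnorm x ^+ 2 = N2 x.
Proof. by rewrite /hnorm /ipnorm sqr_sqrtr // N2_ge0. Qed.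

Lemma hnorm_ge0 (x : H) : 0 <= hnorm x.
Proof. exact: sqrtr_ge0. Qed.

End Ops.

Lemma sq_le (R : realType) (x y : R) : 0 <= x -> x <= y -> x ^+ 2 <= y ^+ 2.
Proof. move=> h1 h2; rewrite !expr2; nra. Qed.

Lemma sq_le_inv (R : realType) (x y : R) : 0 <= y -> x ^+ 2 <= y ^+ 2 -> x <= y.
Proof. move=> h1 h2; rewrite !expr2 in h2; nra. Qed.

Fixpoint iterQ (X H : Type) (z0 : H) (P : X -> H -> H) (G : H -> H) (k : nat) (x : X) : H :=
  match k with 0%N => z0 | k'.+1 => P x (G (iterQ z0 P G k' x)) end.

Theorem theorem4p1 (R : realType) (d : measure_display) (X : measurableType d)
  (mu : {measure set X -> \bar R}) (H : hilbert R) (K : X -> hilbert R)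
  (v : X -> R) (F : X -> set H) (P : X -> H -> H) (Lam : forall x, H -> K x)
  (T U S Sinv : H -> H) (Q : X -> H -> H) :
  separable H ->
  cgf_frame mu v F P Lam T U ->
  is_frame_op mu v P Lam T U S ->
  (forall f, S (Sinv f) = f) -> (forall f, Sinv (S f) = f) ->
  (forall f, Sinv (T f) = T (Sinv f)) ->
  (forall f, Sinv (U f) = U (Sinv f)) ->
  (forall x, orth_proj (Sinv @` F x) (Q x)) ->
  cgf_frame mu v (fun x => Sinv @` F x) Q (fun x f => Lam x (P x (Sinv f))) T U /\
  is_frame_op mu v Q (fun x f => Lam x (P x (Sinv f))) T U Sinv.
Proof.
move=> sH hfr hS SK1 SK2 cT cU oQ.
case: hfr => hFP [wmP [bL [mv [vpos [GT [GU [intg [A [B [A0 [AB hAB]]]]]]]]]]].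
case: hS => [[Slin [M hM]] hSint].
have Sff f : hip H (S f) f = cintegral mu (frame_int v P Lam T U f f) by case: (hSint f f).
have SIm f : complex.Im (hip H (S f) f) = 0.
  by case: (hAB f) => h _; move: h; rewrite -Sff lecE => /andP[/eqP -> _].
have Slow f : A * complex.Re (hip H f f) <= complex.Re (hip H (S f) f).
  by case: (hAB f) => h _; move: h; rewrite -Sff lecE hnorm2 => /andP[_ ->].
have Supp f : complex.Re (hip H (S f) f) <= B * complex.Re (hip H f f).
  by case: (hAB f) => _ h; move: h; rewrite -Sff lecE hnorm2 => /andP[_ ->].
have Ssa := sa_of_real Slin SIm.
pose K2 := M ^+ 2 + A ^+ 2.
have K2p : 0 < K2 by rewrite /K2 ltr_wpDl ?sqr_ge0 ?exprn_gt0.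
have SN2up h : complex.Re (hip H (S h) (S h)) <= K2 * complex.Re (hip H h h).
  have h1 := hM h; have h2 := hnorm_ge0 (S h).
  have := sq_le h2 h1; rewrite exprMn !hnorm2 => h3.
  apply: (le_trans h3); rewrite /K2 ler_wpM2r ?N2_ge0 // lerDl sqr_ge0 //.
have SN2low h : A ^+ 2 * complex.Re (hip H h h) <= complex.Re (hip H (S h) (S h)).
  have cs := CS_Re (S h) h; have l := Slow h.
  have n0 := N2_ge0 h; have n1 := N2_ge0 (S h).
  have [z|nz] := eqVneq (complex.Re (hip H h h)) 0.
    by rewrite z mulr0.
  have np : 0 < complex.Re (hip H h h) by rewrite lt0r nz.
  have l2 : (A * complex.Re (hip H h h)) ^+ 2 <= complex.Re (hip H (S h) h) ^+ 2.
    by apply: sq_le => //; rewrite mulr_ge0 // ltW.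
  have := le_trans l2 cs; rewrite exprMn expr2 [_ * complex.Re (hip H h h)]mulrC => l3.
  rewrite -(ler_pM2r np); move: l3; rewrite mulrA [complex.Re (hip H (S h) (S h)) * _]mulrC.
  by rewrite -mulrA [complex.Re (hip H h h) * _]mulrC mulrA.
have Sinvlin : linop Sinv.
  move=> a x y; rewrite -{1}(SK1 x) -{1}(SK1 y) -linZ // -linD // SK2 //.
have Sinvsa f g : hip H (Sinv f) g = hip H f (Sinv g).
  by rewrite -{1}(SK1 g) -Ssa SK1.
have SinvN2 f : complex.Re (hip H (Sinv f) (Sinv f)) <= complex.Re (hip H f f) / A ^+ 2.
  have := SN2low (Sinv f); rewrite SK1 => h.
  by rewrite ler_pdivlMr ?exprn_gt0 // mulrC.
have Sinvb : bounded_op Sinv.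
  split => //; exists A^-1 => f; apply: sq_le_inv.
    by rewrite mulr_ge0 ?hnorm_ge0 // invr_ge0 (ltW A0).
  by rewrite exprMn !hnorm2 exprVn mulrC; exact: SinvN2.
have key x h : P x (Sinv (h - Q x h)) = 0.
  have [cF oP] := hFP x.
  apply: (proj_perp cF oP) => m Fm.
  rewrite Sinvsa; case: (oQ x h) => _ hQ; apply: hQ; by exists m.
have pD x u w : P x (u + w) = P x u + P x w.
  by have [cF oP] := hFP x; have := proj_lin 1 u w cF oP; rewrite !scale1r.
have pB x u w : P x (u - w) = P x u - P x w.
  have [cF oP] := hFP x.
  by rewrite [u - w]addrC -scaleN1r (proj_lin (-1) w u cF oP) scaleN1r addrC.
have key2 x h : P x (Sinv (Q x h)) = P x (Sinv h).
  have -> : Sinv h = Sinv (h - Q x h) + Sinv (Q x h) by rewrite -linD // subrK.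
  by rewrite pD key add0r.
have intE f g : frame_int v Q (fun x f => Lam x (P x (Sinv f))) T U f g =
    frame_int v P Lam T U (Sinv f) (Sinv g).
  by apply: funext => x; rewrite /frame_int /= !key2 cU cT.
have FO : is_frame_op mu v Q (fun x f => Lam x (P x (Sinv f))) T U Sinv.
  split => // f g; rewrite intE; case: (hSint (Sinv f) (Sinv g)) => i e; split => //.
  by rewrite -e SK1 Sinvsa.
have clQ x : closed_subspace (Sinv @` F x).
  have [[F0 [Fcl Flim]] oP] := hFP x.
  split; first by exists 0 => //; exact: lin0.
  split.
    move=> a _ _ [m1 F1 <-] [m2 F2 <-]; exists (a *: m1 + m2); first exact: Fcl.
    exact: Sinvlin.
  move=> u f hu hc.
  have hm n : F x (S (u n)) by case: (hu n) => m Fm <-; rewrite SK1.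
  exists (S f); last exact: SK2.
  apply: (Flim (fun n => S (u n))) => // e e0.
  have e1 : 0 < e / (`|M| + 1) by rewrite divr_gt0 // ltr_wpDl.
  have [N hN] := hc _ e1; exists N => n nN.
  have := hN n nN; rewrite -/(hnorm _) => hl.
  have hmn := hM (u n - f); rewrite linB // in hmn.
  rewrite -/(hnorm _); apply: (le_lt_trans hmn).
  have hn0 := hnorm_ge0 (u n - f).
  rewrite ltr_pdivlMr ?ltr_wpDl // in hl.
  have := ler_norm M; nra.
have bLam x : bounded_op (fun f => Lam x (P x (Sinv f))).
  have [cF oP] := hFP x.
  case: (bL x) => Llin [ML hML]; split.
    by move=> a f g; rewrite Sinvlin (proj_lin _ _ _ cF oP) Llin.
  exists (Num.max ML 0 / A) => f.
  apply: (le_trans (hML _)).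
  have p1 : hnorm (P x (Sinv f)) <= hnorm (Sinv f).
    by apply: sq_le_inv; [exact: hnorm_ge0|rewrite !hnorm2; exact: (proj_N2 _ oP)].
  have p2 : hnorm (Sinv f) <= A^-1 * hnorm f by apply: sq_le_inv;
    [rewrite mulr_ge0 ?hnorm_ge0 // invr_ge0 (ltW A0)|rewrite exprMn !hnorm2 exprVn mulrC; exact: SinvN2].
  have m0 : 0 <= Num.max ML 0 by rewrite le_max lexx orbT.
  apply: (le_trans (y := Num.max ML 0 * hnorm (P x (Sinv f)))).
    by apply: ler_wpM2r; [exact: hnorm_ge0|rewrite le_max lexx].
  rewrite -mulrA; apply: ler_wpM2l => //; exact: (le_trans p1 p2).
pose c : R[i] := Complex (A ^+ 2) 0.
have cc : Num.conj c = c by apply/eqP; rewrite eq_complex /= oppr0 !eqxx.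
pose Bop z := z - c *: Sinv (Sinv z).
have Bsa z g : hip H (Bop z) g = hip H z (Bop g).
  by rewrite /Bop ipBl ipBr ipZl ipZr !Sinvsa cc.
have Blin : linop Bop.
  move=> a x y; rewrite /Bop !Sinvlin scalerDr scalerBr !scalerA (mulrC c a).
  by rewrite opprD !addrA; congr (_ + _); rewrite addrAC.
have WMQ f : WM (fun x => Q x f).
  pose cf := c *: Sinv f.
  pose G z := Bop z + cf.
  pose y := iterQ 0 P G.
  have WMy k : WM (y k).
    elim: k => [|k IH]; first exact: WM_cst.
    apply: (WM_proj (F := F) sH (fun x => (hFP x).2) wmP).
    have -> : (fun x => G (y k x)) = (fun x => 1 *: Bop (y k x) + cf).
      by apply: funext => x; rewrite scale1r.
    apply: WM_lin; last exact: WM_cst.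
    move=> g; have -> : (fun x => complex.Re (hip H (Bop (y k x)) g)) =
        (fun x => complex.Re (hip H (y k x) (Bop g))) by apply: funext => x; rewrite Bsa.
    exact: IH.
  have WMSy k : WM (fun x => Sinv (y k x)).
    move=> g; have -> : (fun x => complex.Re (hip H (Sinv (y k x)) g)) =
        (fun x => complex.Re (hip H (y k x) (Sinv g))) by apply: funext => x; rewrite Sinvsa.
    exact: WMy.
  pose q := 1 - A ^+ 2 / K2.
  have A2p : 0 < A ^+ 2 by rewrite exprn_gt0.
  have q0 : 0 <= q by rewrite subr_ge0 ler_pdivrMr // mul1r /K2 lerDr sqr_ge0.
  have q1 : q < 1 by rewrite /q ltrBlDr ltrDl divr_gt0.
  have contr e : complex.Re (hip H (Bop e) (Bop e)) <= q * complex.Re (hip H e e).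
    rewrite /Bop Re_ipBB N2Z Re_ipZr -(Sinvsa e (Sinv e)).
    have h1 := SinvN2 (Sinv e).
    have h2 := SN2up (Sinv e); rewrite SK1 in h2.
    set u := complex.Re (hip H (Sinv e) (Sinv e)) in h1 h2 *.
    set s := complex.Re (hip H (Sinv (Sinv e)) (Sinv (Sinv e))) in h1 *.
    set n := complex.Re (hip H e e) in h2 *.
    have h1' : (A ^+ 2) ^+ 2 * s <= A ^+ 2 * u.
      move: h1; rewrite ler_pdivlMr // => h1.
      by rewrite expr2 -mulrA ler_pM2l // mulrC.
    have h2' : A ^+ 2 * (n / K2) <= A ^+ 2 * u.
      by rewrite ler_pM2l // ler_pdivrMr // mulrC.
    have -> : q * n = n - A ^+ 2 * (n / K2) by rewrite /q; field; rewrite gt_eqF.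
    lra.
  move=> g; apply: (measurable_realfun.measurable_fun_cvg
     (h := fun k x => complex.Re (hip H (Sinv (y k x)) g))) => [k|x _]; first exact: WMSy.
  have [cF oP] := hFP x.
  have [m Fm Em] := (oQ x f).1.
  have fixm : P x (G m) = m.
    rewrite /G /Bop Em /cf.
    have -> : m - c *: Sinv (Q x f) + c *: Sinv f = c *: Sinv (f - Q x f) + m.
      by rewrite linB // scalerBr addrC addrCA [RHS]addrC.
    by rewrite (proj_lin _ _ _ cF oP) key (proj_id cF oP Fm) scaler0 add0r.
  have err k : complex.Re (hip H (y k x - m) (y k x - m)) <=
      q ^+ k * complex.Re (hip H (y 0%N x - m) (y 0%N x - m)).
    elim: k => [|k IH]; first by rewrite expr0 mul1r.
    have -> : y k.+1 x - m = P x (Bop (y k x - m)).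
      have -> : y k.+1 x = P x (G (y k x)) by [].
      by rewrite -{1}fixm -pB /G opprD addrACA subrr addr0 (linB (y k x) m Blin).
    apply: (le_trans (proj_N2 _ oP)); apply: (le_trans (contr _)).
    by rewrite exprS -mulrA ler_wpM2l.
  apply: (cvg_geom_sq (C := complex.Re (hip H (y 0%N x - m) (y 0%N x - m)) *
     complex.Re (hip H g g) / A ^+ 2) q0 q1) => k.
  rewrite -raddfB -ipBl -Em -linB //.
  apply: (le_trans (CS_Re _ _)).
  have := SinvN2 (y k x - m); have := err k; have := N2_ge0 g.
  have := N2_ge0 (Sinv (y k x - m)); have := N2_ge0 (y k x - m).
  set a1 := complex.Re (hip H (Sinv (y k x - m)) (Sinv (y k x - m))).
  set a2 := complex.Re (hip H (y k x - m) (y k x - m)).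
  set a3 := complex.Re (hip H (y 0%N x - m) (y 0%N x - m)).
  set a4 := complex.Re (hip H g g).
  move=> b1 b2 b3 b4 b5.
  rewrite ler_pdivlMr // in b5.
  rewrite mulrAC ler_pdivlMr //.
  have c1 := ler_wpM2r b3 b5; have c2 := ler_wpM2r b3 b4.
  have qk : 0 <= q ^+ k by rewrite exprn_ge0.
  nra.
split => //.
split; first by move=> x; split; [exact: clQ | exact: oQ].
split.
  move=> f g; split; first exact: WMQ.
  have -> : (fun x => complex.Im (hip H (Q x f) g)) =
     (fun x => complex.Re (hip H (Q x f) ('i%C *: g))) by apply: funext => x; rewrite Im_as_Re.
  exact: WMQ.
split; first exact: bLam.
do 4 (split => //).
split; first by move=> f; rewrite intE; exact: intg.
have hK : A ^+ 2 <= K2 by rewrite /K2 lerDr sqr_ge0.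
exists (A / K2), (B / A ^+ 2); split; first by rewrite divr_gt0.
split.
  rewrite ler_pdivrMr // mulrAC ler_pdivlMr ?exprn_gt0 //.
  rewrite expr2 in hK *; nra.
move=> f; have [_ e] := FO.2 f f; rewrite -e.
have -> : hip H (Sinv f) f = hip H (S (Sinv f)) (Sinv f) by rewrite Ssa SK1.
rewrite hnorm2 !lecE SIm /= eqxx /=.
have l1 := Slow (Sinv f); have l2 := Supp (Sinv f).
have l3 := SN2up (Sinv f); have l4 := SN2low (Sinv f); rewrite SK1 in l3 l4.
have n0 := N2_ge0 (Sinv f).
split.
  rewrite mulrAC ler_pdivrMr //; nra.
rewrite mulrAC ler_pdivlMr ?exprn_gt0 //; nra.
Qed.
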